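(* In the setting of the context, assume (A1) and (A2) hold. Let $\{z^k\}$ be generated by SAPS, let $N>0$ be an integer, let $\widetilde z^N=(\widetilde x^N,\widetilde y^N)$ be the averaged iterate, and set $\Delta_k=G(z^k,\xi_k)-g(z^k)$. Then for any $z=(x,y)\in\mathbb{Z}$, $$\phi(\widetilde x^N,y)-\phi(x,\widetilde y^N)\le\Big(2\sum_{k=1}^N\gamma_k\Big)^{-1}\Big[\|z-z^1\|^2-\|z^{N+1}-z\|^2+\sum_{k=1}^N\big(\gamma_k^2\|v(z^k)+G(z^k,\xi_k)\|^2+2\gamma_k\langle\Delta_k,z-z^k\rangle\big)\Big]$$ holds for any $v(z^k)=(v_x(x^k),v_y(y^k))$ with $v_x(x^k)\in\partial\vartheta(x^k)$ and $v_y(y^k)\in\partial\omega(y^k)$.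
   Context: Setting: $\vartheta:\mathbb{R}^n\to\mathbb{R}\cup\{+\infty\}$, $\omega:\mathbb{R}^m\to\mathbb{R}\cup\{+\infty\}$ proper lower semicontinuous convex; $\xi$ random vector supported on $\Xi\subseteq\mathbb{R}^q$; $F:\mathbb{R}^n\times\mathbb{R}^m\times\Xi\to\mathbb{R}$, $f(x,y)=\mathbb{E}[F(x,y,\xi)]$ finite, continuous, convex in $x$, concave in $y$ on $\mathbb{Z}:=\mathrm{dom}\,\vartheta\times\mathrm{dom}\,\omega$; $\phi(x,y)=\vartheta(x)+f(x,y)-\omega(y)$; $z=(x,y)$; $\mathrm{Prox}_{\gamma h}(u)=\mathrm{argmin}_w\{h(w)+\frac{1}{2\gamma}\|w-u\|^2\}$. (A1) Samples $\xi_1,\xi_2,\dots$ are i.i.d. copies of $\xi$. (A2) An oracle returns, for $(x,y,\xi)\in\mathbb{Z}\times\Xi$, $G_x(x,y,\xi)\in\mathbb{R}^n$, $G_y(x,y,\xi)\in\mathbb{R}^m$ with $g_x(x,y):=\mathbb{E}[G_x(x,y,\xi)]\in\partial_xf(x,y)$ and $g_y(x,y):=\mathbb{E}[G_y(x,y,\xi)]$, $-g_y(x,y)\in\partial_y[-f](x,y)$. Write $G(z,\xi)=(G_x(z,\xi),-G_y(z,\xi))$, $g(z)=(g_x(z),-g_y(z))$. SAPS algorithm: given $z^1=(x^1,y^1)\in\mathbb{R}^n\times\mathbb{R}^m$ and step sizes $\gamma_k>0$, for $k=1,2,\dots$: $x^{k+1}=\mathrm{Prox}_{\gamma_k\vartheta}(x^k-\gamma_kG_x(x^k,y^k,\xi_k))$,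 $y^{k+1}=\mathrm{Prox}_{\gamma_k\omega}(y^k+\gamma_kG_y(x^k,y^k,\xi_k))$. Averaged iterate $\widetilde z^N=\sum_{j=1}^N\lambda_j^Nz^j$, $\lambda_j^N=\gamma_j/\sum_{i=1}^N\gamma_i$. *)

(* Defs.v *)
From HB Require Import structures.
From mathcomp Require Import all_boot all_order all_algebra.
From mathcomp Require Import all_classical all_reals all_analysis.
Set Implicit Arguments.
Unset Strict Implicit.
Unset Printing Implicit Defensive.
Import Order.TTheory GRing.Theory Num.Theory.
Import numFieldNormedType.Exports.
Local Open Scope classical_set_scope.
Local Open Scope ring_scope.

Section SAPSDefs.
Variable R : realType.

Definition dotv {n : nat} (u v : 'rV[R]_n) : R := \sum_(i < n) u 0 i * v 0 i.
Definition sqnorm {n : nat} (u : 'rV[R]_n) : R := dotv u u.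

Definition edom {n : nat} (h : 'rV[R]_n -> \bar R) : set 'rV[R]_n :=
  [set x | (h x < +oo)%E].

Definition proper_fun {n : nat} (h : 'rV[R]_n -> \bar R) : Prop :=
  (exists x, (h x < +oo)%E) /\ (forall x, (-oo < h x)%E).

Definition econvex {n : nat} (h : 'rV[R]_n -> \bar R) : Prop :=
  forall (x y : 'rV[R]_n) (t : R), 0 < t -> t < 1 ->
    (h (t *: x + (1 - t) *: y)%R <= t%:E * h x + (1 - t)%R%:E * h y)%E.

Definition subgrad {n : nat} (h : 'rV[R]_n -> \bar R) (x v : 'rV[R]_n) : Prop :=
  h x \is a fin_num /\
  forall u, (h x + (dotv v (u - x)%R)%:E <= h u)%E.

Definition is_prox {n : nat} (h : 'rV[R]_n -> \bar R) (gam : R) (u p : 'rV[R]_n) : Prop :=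
  forall w, (h p + ((2 * gam)^-1 * sqnorm (p - u)%R)%:E
             <= h w + ((2 * gam)^-1 * sqnorm (w - u)%R)%:E)%E.

Definition avg_iter {n : nat} (gam : nat -> R) (N : nat) (z : nat -> 'rV[R]_n) : 'rV[R]_n :=
  \sum_(1 <= j < N.+1) (gam j / \sum_(1 <= i < N.+1) gam i) *: z j.

End SAPSDefs.

Definition iid_copies (R : realType) (dT : measure_display) (T : measurableType dT)
  (d : measure_display) (Xi : measurableType d) (P : probability T R)
  (xi0 : T -> Xi) (xi : nat -> T -> Xi) : Prop :=
  measurable_fun setT xi0 /\
  (forall k, (0 < k)%N -> measurable_fun setT (xi k)) /\
  (forall k (A : set Xi), (0 < k)%N -> measurable A ->
     P (xi k @^-1` A) = P (xi0 @^-1` A)) /\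
  (forall (s : seq nat) (A : nat -> set Xi), uniq s -> all (fun k => 0 < k)%N s ->
     (forall k, measurable (A k)) ->
     P (\bigcap_(k in [set` s]) (xi k @^-1` A k)) = (\prod_(k <- s) P (xi k @^-1` A k))%E).

(* Main.v *)
Require Import Defs.
From HB Require Import structures.
From mathcomp Require Import all_boot all_order all_algebra.
From mathcomp Require Import all_classical all_reals all_analysis.
From mathcomp Require Import ring lra.
Import Order.TTheory GRing.Theory Num.Theory.
Import numFieldNormedType.Exports.
Local Open Scope classical_set_scope.
Local Open Scope ring_scope.
Set Implicit Arguments.
Unset Strict Implicit.

Ltac dsum := rewrite /sqnorm /dotv;
  repeat (rewrite -sumrN || rewrite mulr_sumr || rewrite mulr_suml || rewrite -big_split);
  apply: eq_bigr => i _; rewrite !mxE /=.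

Section H.
Variable R : realType.

Lemma sqnorm_ge0 n (u : 'rV[R]_n) : 0 <= sqnorm u.
Proof. rewrite /sqnorm /dotv; apply: sumr_ge0 => i _; nra. Qed.

Lemma sqnormC n (u v : 'rV[R]_n) : sqnorm (u - v) = sqnorm (v - u).
Proof. dsum; ring. Qed.

Lemma fin_of n (th : 'rV[R]_n -> \bar R) a : proper_fun th -> edom th a -> exists r, th a = r%:E.
Proof.
move=> [_ Hp] Ha; have := Hp a; rewrite /edom /= in Ha.
move: Ha; case: (th a) => [r| |] //; by exists r.
Qed.

Lemma small_le (X C : R) : (forall t, 0 < t -> t < 1 -> X <= t * C) -> X <= 0.
Proof.
move=> H; rewrite leNgt; apply/negP => X0.
set D := `|C| + X.
have D0 : 0 < D by rewrite /D; have := normr_ge0 C; lra.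
set t := X / (2 * D).
have t0 : 0 < t by rewrite /t divr_gt0 // mulr_gt0.
have tD : t * `|C| + t * X = X / 2.
  by rewrite -mulrDr /t -/D; field; rewrite gt_eqF.
have tX : 0 < t * X by rewrite mulr_gt0.
have tC : t * C <= t * `|C| by apply: ler_wpM2l; [exact: ltW | exact: ler_norm].
have t1 : t < 1.
  rewrite /t ltr_pdivrMr ?mulr_gt0 // mul1r /D; have := normr_ge0 C; lra.
have := H t t0 t1; lra.
Qed.

Lemma prox_step n (th : 'rV[R]_n -> \bar R) (g : R) (xk p v G w : 'rV[R]_n) :
  proper_fun th -> econvex th -> 0 < g ->
  is_prox th g (xk - g *: G) p -> subgrad th xk v -> edom th w ->
  g * (fine (th xk) - fine (th w)) <= (sqnorm (w - xk) - sqnorm (p - w)) / 2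
     + g ^+ 2 * sqnorm (v + G) / 2 + g * dotv G (w - xk).
Proof.
move=> Hpr Hcv g0 Hpx [fxk Hsg] Hw.
have [b Eb] := fin_of Hpr Hw.
have [e Ee] : exists e, th xk = e%:E by exists (fine (th xk)); rewrite fineK.
have [a Ea] : exists a, th p = a%:E.
  apply: fin_of => //; rewrite /edom /=; have := Hpx xk; rewrite Ee.
  by case: (th p) => [r||] //= _; rewrite ?ltry ?ltNye.
set u := xk - g *: G.
have key : forall t, 0 < t -> t < 1 ->
    g * (a - b) - dotv (p - u) (w - p) <= t * (sqnorm (w - p) / 2).
  move=> t t0 t1.
  have Hc := Hcv w p t t0 t1; have Hq := Hpx (t *: w + (1 - t) *: p).
  rewrite Eb Ea in Hc; rewrite Ea in Hq.
  have [c Ec] : exists c, th (t *: w + (1 - t) *: p) = c%:E.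
    apply: fin_of => //; rewrite /edom /=; apply: le_lt_trans Hc _.
    by rewrite -EFinM -EFinM -EFinD ltry.
  rewrite Ec -EFinM -EFinM -EFinD lee_fin in Hc.
  rewrite Ec -!EFinD lee_fin in Hq.
  have Eq : sqnorm (t *: w + (1 - t) *: p - u) = sqnorm (p - u)
      + 2 * t * dotv (p - u) (w - p) + t ^+ 2 * sqnorm (w - p). by dsum; ring.
  rewrite Eq in Hq.
  have Hc' : c <= a - t * a + t * b by move: Hc; rewrite mulrBl mul1r; lra.
  have H1 : t * (a - b) <= (2 * g)^-1 * (2 * t * dotv (p - u) (w - p) + t ^+ 2 * sqnorm (w - p)).
    move: Hq; rewrite mulrBr !mulrDr; lra.
  have H2 := ler_wpM2l (ltW g0) H1.
  rewrite -(ler_pM2l t0).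
  have -> : t * (g * (a - b) - dotv (p - u) (w - p)) = g * (t * (a - b)) - t * dotv (p - u) (w - p) by ring.
  have -> : t * (t * (sqnorm (w - p) / 2)) = g * ((2 * g)^-1 * (2 * t * dotv (p - u) (w - p) + t ^+ 2 * sqnorm (w - p))) - t * dotv (p - u) (w - p).
    by field; rewrite gt_eqF.
  lra.
have key2 := small_le key.
have Hs := Hsg p; rewrite Ee Ea -EFinD lee_fin in Hs.
have Hs' : g * (e + dotv v (p - xk)) <= g * a by apply: ler_wpM2l => //; exact: ltW.
have Id : (sqnorm (w - xk) - sqnorm (p - w)) / 2 + g ^+ 2 * sqnorm (v + G) / 2
   + g * dotv G (w - xk) - (dotv (p - u) (w - p) - g * dotv v (p - xk))
   = sqnorm (p - xk + g *: (v + G)) / 2.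
  by rewrite /u; dsum; field.
have := sqnorm_ge0 (p - xk + g *: (v + G)).
rewrite Ee Eb /=.
move: Hs' key2; rewrite !mulrDr ?mulrN; lra.
Qed.

Lemma sum_pos (g : nat -> R) N : (0 < N)%N -> (forall k, (0 < k)%N -> 0 < g k) ->
  0 < \sum_(1 <= i < N.+1) g i.
Proof.
move=> N0 gp; elim: N N0 => [//|N IH] _.
rewrite big_nat_recr //=; case: N IH => [_|N IH].
  by rewrite big_geq // add0r gp.
by rewrite addr_gt0 ?IH ?gp.
Qed.

Lemma jensen (V : lmodType R) (D : V -> Prop) (h : V -> R) :
  (forall a1 a2 t, D a1 -> D a2 -> 0 <= t -> t <= 1 ->
     D (t *: a1 + (1 - t) *: a2) /\ h (t *: a1 + (1 - t) *: a2) <= t * h a1 + (1 - t) * h a2) ->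
  forall (g : nat -> R) (z : nat -> V) N, (0 < N)%N -> (forall k, (0 < k)%N -> 0 < g k) ->
  (forall k, (0 < k)%N -> (k <= N)%N -> D (z k)) ->
  D ((\sum_(1 <= i < N.+1) g i)^-1 *: \sum_(1 <= j < N.+1) g j *: z j) /\
  (\sum_(1 <= i < N.+1) g i) * h ((\sum_(1 <= i < N.+1) g i)^-1 *: \sum_(1 <= j < N.+1) g j *: z j)
    <= \sum_(1 <= j < N.+1) g j * h (z j).
Proof.
move=> Hc g z N N0 gp Dz.
elim: N N0 Dz => [//|N IH] _ Dz.
case: N IH Dz => [_ Dz|N IH Dz].
  rewrite !big_nat1 scalerA mulVf ?gt_eqF ?gp // scale1r; split; first exact: Dz.
  by rewrite lexx.
have [IH1 IH2] := IH isT (fun k k0 kN => Dz k k0 (leqW kN)).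
have S0 := sum_pos (ltn0Sn N) gp.
set S := \sum_(1 <= i < N.+2) g i in IH1 IH2 S0.
set A := \sum_(1 <= j < N.+2) g j *: z j in IH1 IH2.
set B := \sum_(1 <= j < N.+2) g j * h (z j) in IH2.
have E1 : \sum_(1 <= i < N.+3) g i = S + g N.+2 by rewrite big_nat_recr.
have E2 : \sum_(1 <= i < N.+3) g i *: z i = A + g N.+2 *: z N.+2 by rewrite big_nat_recr.
have E3 : \sum_(1 <= i < N.+3) g i * h (z i) = B + g N.+2 * h (z N.+2) by rewrite big_nat_recr.
rewrite E1 E2 E3.
have g0 := gp N.+2 isT.
have S'0 : 0 < S + g N.+2 by rewrite addr_gt0.
set a := S^-1 *: A in IH1 IH2.
set t := S / (S + g N.+2).
have t0 : 0 <= t by rewrite /t divr_ge0 // ltW.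
have t1 : t <= 1 by rewrite /t ler_pdivrMr // mul1r lerDl ltW.
have Ht : t *: a + (1 - t) *: z N.+2 = (S + g N.+2)^-1 *: (A + g N.+2 *: z N.+2).
  have -> : 1 - t = (S + g N.+2)^-1 * g N.+2 by rewrite /t; field; rewrite gt_eqF.
  rewrite /a scalerA scalerDr [in RHS]scalerA; congr (_ *: _ + _).
  by rewrite /t; field; rewrite !gt_eqF.
have [D' H'] := Hc a (z N.+2) t IH1 (Dz N.+2 isT (leqnn _)) t0 t1.
rewrite -Ht; split => //.
have := ler_wpM2l (ltW S'0) H'.
have -> : (S + g N.+2) * (t * h a + (1 - t) * h (z N.+2)) = S * h a + g N.+2 * h (z N.+2).
  by rewrite /t; field; rewrite gt_eqF.
lra.
Qed.

Lemma fin_edom n (th : 'rV[R]_n -> \bar R) a : th a \is a fin_num -> edom th a.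
Proof. by rewrite fin_numElt => /andP[]. Qed.

Lemma econv_real n (th : 'rV[R]_n -> \bar R) : proper_fun th -> econvex th ->
  forall a1 a2 t, edom th a1 -> edom th a2 -> 0 <= t -> t <= 1 ->
  edom th (t *: a1 + (1 - t) *: a2) /\
  fine (th (t *: a1 + (1 - t) *: a2)) <= t * fine (th a1) + (1 - t) * fine (th a2).
Proof.
move=> Pth Cth a1 a2 t H1 H2 t0 t1.
have [->|tn0] := eqVneq t 0.
  by rewrite scale0r add0r subr0 scale1r mul0r add0r mul1r lexx.
have [->|tn1] := eqVneq t 1.
  by rewrite subrr scale0r addr0 scale1r mul1r mul0r addr0 lexx.
have tp : 0 < t by rewrite lt_neqAle eq_sym tn0.
have tl : t < 1 by rewrite lt_neqAle tn1.
have [r1 E1] := fin_of Pth H1; have [r2 E2] := fin_of Pth H2.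
have Hc := Cth a1 a2 t tp tl.
rewrite E1 E2 -EFinM -EFinM -EFinD in Hc.
have [c Ec] : exists c, th (t *: a1 + (1 - t) *: a2) = c%:E.
  by apply: fin_of => //; rewrite /edom /=; apply: le_lt_trans Hc _; rewrite ltry.
rewrite Ec lee_fin in Hc.
by split; [rewrite /edom /= Ec ltry | rewrite Ec E1 E2 /=].
Qed.

Lemma dotvDl n (a b c : 'rV[R]_n) : dotv (a + b) c = dotv a c + dotv b c.
Proof. by rewrite /dotv -big_split; apply: eq_bigr => i _; rewrite !mxE mulrDl. Qed.

End H.
Unset Implicit Arguments.
Unset Strict Implicit.

Theorem proposition2p1
  (R : realType) (n m : nat)
  (d : measure_display) (Xi : measurableType d)
  (dT : measure_display) (T : measurableType dT) (P : probability T R)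
  (xi0 : T -> Xi) (xi : nat -> T -> Xi)
  (theta : 'rV[R]_n -> \bar R) (omega : 'rV[R]_m -> \bar R)
  (F : 'rV[R]_n -> 'rV[R]_m -> Xi -> R) (f : 'rV[R]_n -> 'rV[R]_m -> R)
  (Gx : 'rV[R]_n -> 'rV[R]_m -> Xi -> 'rV[R]_n)
  (Gy : 'rV[R]_n -> 'rV[R]_m -> Xi -> 'rV[R]_m)
  (gx : 'rV[R]_n -> 'rV[R]_m -> 'rV[R]_n)
  (gy : 'rV[R]_n -> 'rV[R]_m -> 'rV[R]_m)
  (gam : nat -> R) (N : nat) (w : T)
  (xs : nat -> 'rV[R]_n) (ys : nat -> 'rV[R]_m)
  (vx : nat -> 'rV[R]_n) (vy : nat -> 'rV[R]_m)
  (x : 'rV[R]_n) (y : 'rV[R]_m) :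
  (* standing assumptions on theta, omega *)
  proper_fun theta -> lower_semicontinuous theta -> econvex theta ->
  proper_fun omega -> lower_semicontinuous omega -> econvex omega ->
  (* f = E[F(.,.,xi)] finite, continuous, convex-concave on Z *)
  (forall a b, edom theta a -> edom omega b ->
     P.-integrable setT (fun t => (F a b (xi0 t))%:E) /\
     (f a b)%:E = (\int[P]_t (F a b (xi0 t))%:E)%E) ->
  {within [set p : 'rV[R]_n * 'rV[R]_m | edom theta p.1 /\ edom omega p.2],
     continuous (fun p => f p.1 p.2)} ->
  (forall b, edom omega b -> forall a1 a2 t, edom theta a1 -> edom theta a2 ->
     0 <= t -> t <= 1 -> f (t *: a1 + (1 - t) *: a2) b <= t * f a1 b + (1 - t) * f a2 b) ->
  (forall a, edom theta a -> forall b1 b2 t, edom omega b1 -> edom omega b2 ->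
     0 <= t -> t <= 1 -> t * f a b1 + (1 - t) * f a b2 <= f a (t *: b1 + (1 - t) *: b2)) ->
  (* (A1) *)
  iid_copies P xi0 xi ->
  (* (A2) *)
  (forall a b, edom theta a -> edom omega b ->
     (forall i, P.-integrable setT (fun t => (Gx a b (xi0 t) 0 i)%:E) /\
        (gx a b 0 i)%:E = (\int[P]_t (Gx a b (xi0 t) 0 i)%:E)%E) /\
     (forall j, P.-integrable setT (fun t => (Gy a b (xi0 t) 0 j)%:E) /\
        (gy a b 0 j)%:E = (\int[P]_t (Gy a b (xi0 t) 0 j)%:E)%E) /\
     (forall a', edom theta a' -> f a b + dotv (gx a b) (a' - a) <= f a' b) /\
     (forall b', edom omega b' -> - f a b + dotv (- gy a b) (b' - b) <= - f a b')) ->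
  (* SAPS iterates along the sample path w *)
  (forall k, (0 < k)%N -> 0 < gam k) ->
  (forall k, (0 < k)%N ->
     is_prox theta (gam k) (xs k - gam k *: Gx (xs k) (ys k) (xi k w)) (xs k.+1) /\
     is_prox omega (gam k) (ys k + gam k *: Gy (xs k) (ys k) (xi k w)) (ys k.+1)) ->
  (0 < N)%N ->
  (* arbitrary subgradients v(z^k) *)
  (forall k, (0 < k)%N -> (k <= N)%N -> subgrad theta (xs k) (vx k) /\ subgrad omega (ys k) (vy k)) ->
  (* z = (x, y) in Z *)
  edom theta x -> edom omega y ->
  let xt := avg_iter gam N xs in
  let yt := avg_iter gam N ys in
  ((theta xt + (f xt y)%:E - omega y) - (theta x + (f x yt)%:E - omega yt)
   <= ((2 * \sum_(1 <= k < N.+1) gam k)^-1 *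
        ((sqnorm (x - xs 1%N) + sqnorm (y - ys 1%N))
         - (sqnorm (xs N.+1 - x) + sqnorm (ys N.+1 - y))
         + \sum_(1 <= k < N.+1)
             (gam k ^+ 2 * (sqnorm (vx k + Gx (xs k) (ys k) (xi k w))
                            + sqnorm (vy k - Gy (xs k) (ys k) (xi k w)))
              + 2 * gam k *
                (dotv (Gx (xs k) (ys k) (xi k w) - gx (xs k) (ys k)) (x - xs k)
                 + dotv (- (Gy (xs k) (ys k) (xi k w) - gy (xs k) (ys k))) (y - ys k)))))%:E)%E.

Proof.
move=> Pth lsc_th Cth Pom lsc_om Com Hf fcont fcvx fccv iid HA2 gp Hprox N0 Hsub Hx Hy.
cbv zeta.
set xt := avg_iter gam N xs.
set yt := avg_iter gam N ys.
set S := \sum_(1 <= k < N.+1) gam k.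
have S0 : 0 < S := sum_pos N0 gp.
have avgE : forall p (z : nat -> 'rV[R]_p), avg_iter gam N z = S^-1 *: \sum_(1 <= j < N.+1) gam j *: z j.
  move=> p z; rewrite /avg_iter scaler_sumr; apply: eq_bigr => j _.
  by rewrite scalerA mulrC.
have Dxs : forall k, (0 < k)%N -> (k <= N)%N -> edom theta (xs k).
  by move=> k k0 kN; apply: fin_edom; have [[]] := Hsub k k0 kN.
have Dys : forall k, (0 < k)%N -> (k <= N)%N -> edom omega (ys k).
  by move=> k k0 kN; apply: fin_edom; have [_ []] := Hsub k k0 kN.
pose h1 a := fine (theta a) + f a y.
pose h2 b := fine (omega b) - f x b.
have C1 : forall a1 a2 t, edom theta a1 -> edom theta a2 -> 0 <= t -> t <= 1 ->
    edom theta (t *: a1 + (1 - t) *: a2) /\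
    h1 (t *: a1 + (1 - t) *: a2) <= t * h1 a1 + (1 - t) * h1 a2.
  move=> a1 a2 t Ha1 Ha2 t0 t1.
  have [Hd Hl] := econv_real Pth Cth Ha1 Ha2 t0 t1.
  split => //; rewrite /h1 !mulrDr; have := fcvx y Hy a1 a2 t Ha1 Ha2 t0 t1; lra.
have C2 : forall a1 a2 t, edom omega a1 -> edom omega a2 -> 0 <= t -> t <= 1 ->
    edom omega (t *: a1 + (1 - t) *: a2) /\
    h2 (t *: a1 + (1 - t) *: a2) <= t * h2 a1 + (1 - t) * h2 a2.
  move=> a1 a2 t Ha1 Ha2 t0 t1.
  have [Hd Hl] := econv_real Pom Com Ha1 Ha2 t0 t1.
  split => //; rewrite /h2 !mulrBr; have := fccv x Hx a1 a2 t Ha1 Ha2 t0 t1; lra.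
have [J1a J1b] := jensen C1 N0 gp Dxs.
have [J2a J2b] := jensen C2 N0 gp Dys.
rewrite -/S -avgE -/xt in J1a J1b.
rewrite -/S -avgE -/yt in J2a J2b.
pose Dk k := sqnorm (x - xs k) + sqnorm (y - ys k).
pose Tk k := gam k ^+ 2 * (sqnorm (vx k + Gx (xs k) (ys k) (xi k w))
                            + sqnorm (vy k - Gy (xs k) (ys k) (xi k w)))
              + 2 * gam k *
                (dotv (Gx (xs k) (ys k) (xi k w) - gx (xs k) (ys k)) (x - xs k)
                 + dotv (- (Gy (xs k) (ys k) (xi k w) - gy (xs k) (ys k))) (y - ys k)).
have step : forall k, (0 < k)%N -> (k <= N)%N ->
  2 * (gam k * h1 (xs k)) + 2 * (gam k * h2 (ys k))
    - 2 * (gam k * (fine (omega y) + fine (theta x)))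
  <= (Dk k - Dk k.+1) + Tk k.
  move=> k k0 kN.
  have [Px Py] := Hprox k k0; have [Sx Sy] := Hsub k k0 kN.
  have Py' : is_prox omega (gam k) (ys k - gam k *: (- Gy (xs k) (ys k) (xi k w))) (ys k.+1).
    by rewrite scalerN opprK.
  have X := prox_step Pth Cth (gp k k0) Px Sx Hx.
  have Y := prox_step Pom Com (gp k k0) Py' Sy Hy.
  have [_ [_ [Fx Fy]]] := HA2 _ _ (Dxs k k0 kN) (Dys k k0 kN).
  have Fx' := ler_wpM2l (ltW (gp k k0)) (Fx x Hx).
  have Fy' := ler_wpM2l (ltW (gp k k0)) (Fy y Hy).
  rewrite (sqnormC (xs k.+1)) in X; rewrite (sqnormC (ys k.+1)) in Y.
  have E1 : dotv (Gx (xs k) (ys k) (xi k w)) (x - xs k) =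
     dotv (Gx (xs k) (ys k) (xi k w) - gx (xs k) (ys k)) (x - xs k) + dotv (gx (xs k) (ys k)) (x - xs k).
    by rewrite -dotvDl subrK.
  have E2 : dotv (- Gy (xs k) (ys k) (xi k w)) (y - ys k) =
     dotv (- (Gy (xs k) (ys k) (xi k w) - gy (xs k) (ys k))) (y - ys k) + dotv (- gy (xs k) (ys k)) (y - ys k).
    by rewrite -dotvDl -opprD subrK.
  rewrite E1 in X; rewrite E2 in Y.
  rewrite /h1 /h2 /Dk /Tk.
  move: X Y Fx' Fy'; rewrite !mulrDr ?mulrN; lra.
have Sm : \sum_(1 <= k < N.+1) (2 * (gam k * h1 (xs k)) + 2 * (gam k * h2 (ys k))
    - 2 * (gam k * (fine (omega y) + fine (theta x))))
  <= \sum_(1 <= k < N.+1) ((Dk k - Dk k.+1) + Tk k).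
  by apply: ler_sum_nat => k /andP[k0 kN]; exact: step k k0 kN.
have L : \sum_(1 <= k < N.+1) (2 * (gam k * h1 (xs k)) + 2 * (gam k * h2 (ys k))
    - 2 * (gam k * (fine (omega y) + fine (theta x))))
  = 2 * \sum_(1 <= k < N.+1) gam k * h1 (xs k) + 2 * \sum_(1 <= k < N.+1) gam k * h2 (ys k)
    - 2 * (S * (fine (omega y) + fine (theta x))).
  by rewrite !big_split /= sumrN -!mulr_sumr -mulr_suml.
have Tel : \sum_(1 <= k < N.+1) (Dk k - Dk k.+1) = - Dk N.+1 - - Dk 1%N.
  apply: (telescope_sumr_eq (fun k => - Dk k)) => // k _.
  by rewrite opprK addrC.
rewrite L big_split /= Tel in Sm.
have [ax Eax] := fin_of Pth J1a; have [ay Eay] := fin_of Pom J2a.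
have [tx Etx] := fin_of Pth Hx; have [oy Eoy] := fin_of Pom Hy.
rewrite /h1 Eax /= in J1b; rewrite /h2 Eay /= in J2b.
rewrite Eoy Etx /= in Sm.
have K : 2 * S * (ax + f xt y - oy - (tx + f x yt - ay)) <=
   Dk 1%N - Dk N.+1 + \sum_(1 <= k < N.+1) Tk k.
  move: J1b J2b Sm; rewrite /h1 /h2; lra.
rewrite Eax Eay Etx Eoy.
repeat (rewrite -EFinD || rewrite -EFinB || rewrite -EFinN).
rewrite lee_fin -/S (sqnormC (xs N.+1)) (sqnormC (ys N.+1)).
have S2 : 0 < 2 * S by rewrite mulr_gt0.
rewrite -[X in X <= _](@mulKf _ (2 * S)) ?gt_eqF //.
apply: ler_wpM2l; first by rewrite invr_ge0 ltW.
exact: K.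
Qed.
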